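(* Let $X$ and $Y$ be real separated locally convex spaces, $U\subseteq X$ and $V\subseteq Y$ convex sets, and $A:X\to Y$ a linear continuous mapping. Then $$(0,0)\in {}^{ic}\big(U\times V-\Delta_X^A\big)\iff 0\in {}^{ic}\big(V-A(U)\big).$$
   Context: $\Delta_X^A:=\{(x,Ax):x\in X\}\subseteq X\times Y$. For a set $D$ in a real separated locally convex space $E$: $\operatorname{aff}D$ is its affine hull; $\operatorname{icr}D=\{u\in E:\forall x\in\operatorname{aff}(D-D)\ \exists\delta>0\ \forall\lambda\in[0,\delta]:\ u+\lambda x\in D\}$; the intrinsic relative algebraic interior is ${}^{ic}D=\operatorname{icr}D$ if $\operatorname{aff}D$ is closed and ${}^{ic}D=\emptyset$ otherwise. *)

(* Defs.v *)
From Stdlib Require Import Reals.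
Open Scope R_scope.

(* Raw data of a real topological vector space: carrier, linear operations,
   and a family of open sets.  Axioms are imposed separately by [is_sep_lcs]. *)
Record TVSdata := {
  car :> Type;
  vzero : car;
  vadd : car -> car -> car;
  vopp : car -> car;
  vscal : R -> car -> car;
  vopen : (car -> Prop) -> Prop
}.

Arguments vzero {t}.
Arguments vadd {t}.
Arguments vopp {t}.
Arguments vscal {t}.
Arguments vopen {t}.

Definition convex {E : TVSdata} (C : E -> Prop) : Prop :=
  forall x y (l : R), C x -> C y -> 0 <= l <= 1 ->
    C (vadd (vscal (1 - l) x) (vscal l y)).

Definition vclosed {E : TVSdata} (C : E -> Prop) : Prop :=
  vopen (fun x => ~ C x).

Definition is_vector_space (E : TVSdata) : Prop :=
  (forall x y z : E, vadd x (vadd y z) = vadd (vadd x y) z) /\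
  (forall x y : E, vadd x y = vadd y x) /\
  (forall x : E, vadd x vzero = x) /\
  (forall x : E, vadd x (vopp x) = vzero) /\
  (forall (a b : R) (x : E), vscal a (vscal b x) = vscal (a * b) x) /\
  (forall x : E, vscal 1 x = x) /\
  (forall (a : R) (x y : E), vscal a (vadd x y) = vadd (vscal a x) (vscal a y)) /\
  (forall (a b : R) (x : E), vscal (a + b) x = vadd (vscal a x) (vscal b x)).

Definition is_topology (E : TVSdata) : Prop :=
  vopen (fun _ : E => True) /\
  (forall A B : E -> Prop, vopen A -> vopen B -> vopen (fun x => A x /\ B x)) /\
  (forall F : (E -> Prop) -> Prop, (forall W, F W -> vopen W) ->
      vopen (fun x => exists W, F W /\ W x)).

Definition add_continuous (E : TVSdata) : Prop :=
  forall (x y : E) (W : E -> Prop), vopen W -> W (vadd x y) ->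
    exists W1 W2 : E -> Prop, vopen W1 /\ W1 x /\ vopen W2 /\ W2 y /\
      forall a b, W1 a -> W2 b -> W (vadd a b).

Definition scal_continuous (E : TVSdata) : Prop :=
  forall (r : R) (x : E) (W : E -> Prop), vopen W -> W (vscal r x) ->
    exists d : R, 0 < d /\ exists W1 : E -> Prop, vopen W1 /\ W1 x /\
      forall (s : R) (z : E), Rabs (s - r) < d -> W1 z -> W (vscal s z).

(* Local convexity: every neighbourhood of 0 contains a convex open neighbourhood of 0
   (with continuous translations this gives a convex local base everywhere). *)
Definition locally_convex (E : TVSdata) : Prop :=
  forall W : E -> Prop, vopen W -> W vzero ->
    exists C : E -> Prop, vopen C /\ convex C /\ C vzero /\ forall x, C x -> W x.

Definition hausdorff (E : TVSdata) : Prop :=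
  forall x y : E, x <> y ->
    exists A B : E -> Prop, vopen A /\ vopen B /\ A x /\ B y /\
      forall z, A z -> B z -> False.

Definition is_sep_lcs (E : TVSdata) : Prop :=
  is_vector_space E /\ is_topology E /\ add_continuous E /\ scal_continuous E /\
  locally_convex E /\ hausdorff E.

Definition linear_continuous {X Y : TVSdata} (A : X -> Y) : Prop :=
  (forall x y : X, A (vadd x y) = vadd (A x) (A y)) /\
  (forall (r : R) (x : X), A (vscal r x) = vscal r (A x)) /\
  (forall W : Y -> Prop, vopen W -> vopen (fun x => W (A x))).

Definition prodT (X Y : TVSdata) : TVSdata := {|
  car := (car X * car Y)%type;
  vzero := (vzero, vzero);
  vadd := fun p q => (vadd (fst p) (fst q), vadd (snd p) (snd q));
  vopp := fun p => (vopp (fst p), vopp (snd p));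
  vscal := fun r p => (vscal r (fst p), vscal r (snd p));
  vopen := fun W => forall p, W p ->
     exists (A : X -> Prop) (B : Y -> Prop), vopen A /\ vopen B /\ A (fst p) /\ B (snd p) /\
       forall a b, A a -> B b -> W (a, b)
|}.

Definition msub {E : TVSdata} (S T : E -> Prop) : E -> Prop :=
  fun z => exists s t, S s /\ T t /\ z = vadd s (vopp t).

Definition setprod {X Y : TVSdata} (U : X -> Prop) (V : Y -> Prop) : prodT X Y -> Prop :=
  fun p => U (fst p) /\ V (snd p).

Definition DeltaA {X Y : TVSdata} (A : X -> Y) : prodT X Y -> Prop :=
  fun p => exists x : X, p = (x, A x).

Definition image {X Y : TVSdata} (A : X -> Y) (U : X -> Prop) : Y -> Prop :=
  fun y => exists x, U x /\ y = A x.

Definition affine_set {E : TVSdata} (S : E -> Prop) : Prop :=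
  forall x y (l : R), S x -> S y -> S (vadd (vscal (1 - l) x) (vscal l y)).

Definition aff {E : TVSdata} (D : E -> Prop) : E -> Prop :=
  fun x => forall S : E -> Prop, affine_set S -> (forall d, D d -> S d) -> S x.

Definition icr {E : TVSdata} (D : E -> Prop) : E -> Prop :=
  fun u => forall x, aff (msub D D) x ->
    exists d : R, 0 < d /\ forall l : R, 0 <= l <= d -> D (vadd u (vscal l x)).

Definition ic {E : TVSdata} (D : E -> Prop) : E -> Prop :=
  fun u => vclosed (aff D) /\ icr D u.

(* Main.v *)
Require Import Defs.
From Stdlib Require Import Reals Lra FunctionalExtensionality PropExtensionality.
Open Scope R_scope.

Section VS.
Variable E : TVSdata.
Hypothesis HE : is_vector_space E.

Lemma v_addA (x y z : E) : vadd x (vadd y z) = vadd (vadd x y) z.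
Proof. apply HE. Qed.
Lemma v_addC (x y : E) : vadd x y = vadd y x.
Proof. apply HE. Qed.
Lemma v_add0 (x : E) : vadd x vzero = x.
Proof. apply HE. Qed.
Lemma v_addN (x : E) : vadd x (vopp x) = vzero.
Proof. apply HE. Qed.
Lemma v_scalA (a b : R) (x : E) : vscal a (vscal b x) = vscal (a * b) x.
Proof. apply HE. Qed.
Lemma v_scal1 (x : E) : vscal 1 x = x.
Proof. apply HE. Qed.
Lemma v_scalDr (a : R) (x y : E) : vscal a (vadd x y) = vadd (vscal a x) (vscal a y).
Proof. apply HE. Qed.
Lemma v_scalDl (a b : R) (x : E) : vscal (a + b) x = vadd (vscal a x) (vscal b x).
Proof. apply HE. Qed.

Lemma v_add0l (x : E) : vadd vzero x = x.
Proof. rewrite v_addC; apply v_add0. Qed.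

Lemma v_cancel0 (a b : E) : vadd a b = a -> b = vzero.
Proof.
  intros H. transitivity (vadd (vadd (vopp a) a) b).
  - rewrite (v_addC (vopp a)), v_addN. symmetry. apply v_add0l.
  - rewrite <- v_addA, H, v_addC. apply v_addN.
Qed.

Lemma v_opp_unique (x y : E) : vadd x y = vzero -> y = vopp x.
Proof.
  intros H. rewrite <- (v_add0 y), <- (v_addN x), v_addA, (v_addC y), H. apply v_add0l.
Qed.

Lemma v_swap (a b c d : E) : vadd (vadd a b) (vadd c d) = vadd (vadd a c) (vadd b d).
Proof.
  rewrite <- !v_addA. f_equal. rewrite !v_addA. f_equal. apply v_addC.
Qed.

Lemma v_opp_add (x y : E) : vopp (vadd x y) = vadd (vopp x) (vopp y).
Proof.
  symmetry. apply v_opp_unique. rewrite v_swap, !v_addN. apply v_add0.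
Qed.

Lemma v_opp0 : vopp (@vzero E) = vzero.
Proof. symmetry. apply v_opp_unique. apply v_add0. Qed.

Lemma v_scal0l (x : E) : vscal 0 x = vzero.
Proof.
  apply (v_cancel0 (vscal 0 x)). rewrite <- v_scalDl. f_equal. ring.
Qed.

Lemma v_scal0r (a : R) : vscal a (@vzero E) = vzero.
Proof.
  apply (v_cancel0 (vscal a vzero)). rewrite <- v_scalDr. f_equal. apply v_add0.
Qed.

Lemma v_scalN (a : R) (x : E) : vscal a (vopp x) = vopp (vscal a x).
Proof.
  apply v_opp_unique. rewrite <- v_scalDr, v_addN. apply v_scal0r.
Qed.

Lemma v_scalN1 (x : E) : vscal (-1) x = vopp x.
Proof.
  apply v_opp_unique. rewrite <- (v_scal1 x) at 1. rewrite <- v_scalDl.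
  replace (1 + -1) with 0 by ring. apply v_scal0l.
Qed.

Lemma v_addK (x y : E) : vadd (vadd x y) (vopp y) = x.
Proof. rewrite <- v_addA, v_addN. apply v_add0. Qed.

Lemma v_subK (x y : E) : vadd (vadd x (vopp y)) y = x.
Proof. rewrite <- v_addA, (v_addC (vopp y)), v_addN. apply v_add0. Qed.

Lemma v_sub_comb (a b : R) (x1 x2 y1 y2 : E) :
  vadd (vadd (vscal a x1) (vscal b x2)) (vopp (vadd (vscal a y1) (vscal b y2)))
  = vadd (vscal a (vadd x1 (vopp y1))) (vscal b (vadd x2 (vopp y2))).
Proof.
  rewrite !v_scalDr, !v_scalN, v_opp_add. apply v_swap.
Qed.

Lemma v_comb_same (l : R) (x : E) : vadd (vscal (1 - l) x) (vscal l x) = x.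
Proof. rewrite <- v_scalDl. replace (1 - l + l) with 1 by ring. apply v_scal1. Qed.

Lemma v_comb_shift (l : R) (y1 y2 z : E) :
  vadd (vscal (1 - l) (vadd y1 z)) (vscal l (vadd y2 z))
  = vadd (vadd (vscal (1 - l) y1) (vscal l y2)) z.
Proof. rewrite !v_scalDr, v_swap, v_comb_same. reflexivity. Qed.

Lemma v_sub_sub (x y : E) : vadd x (vopp (vadd x (vopp y))) = y.
Proof.
  rewrite v_opp_add, v_addA, v_addN, v_add0l.
  symmetry. apply v_opp_unique. rewrite v_addC. apply v_addN.
Qed.

Lemma v_oppK (x : E) : vopp (vopp x) = x.
Proof. symmetry. apply v_opp_unique. rewrite v_addC. apply v_addN. Qed.

End VS.

Lemma aff_incl {E : TVSdata} (D : E -> Prop) d : D d -> aff D d.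
Proof. intros Hd S _ HS. auto. Qed.

Lemma aff_affine {E : TVSdata} (D : E -> Prop) : affine_set (aff D).
Proof. intros x y l Hx Hy S HS HD. apply HS; [apply Hx|apply Hy]; auto. Qed.

Lemma vopen_ext {E : TVSdata} (P Q : E -> Prop) :
  (forall x, P x <-> Q x) -> vopen P -> vopen Q.
Proof.
  intros H HP. replace Q with P; auto.
  apply functional_extensionality; intros x; apply propositional_extensionality; auto.
Qed.

Section Main.
Variables X Y : TVSdata.
Hypothesis HXv : is_vector_space X.
Hypothesis HYv : is_vector_space Y.
Variable A : X -> Y.
Hypothesis HAadd : forall x y : X, A (vadd x y) = vadd (A x) (A y).
Hypothesis HAscal : forall (r : R) (x : X), A (vscal r x) = vscal r (A x).

Lemma A0 : A vzero = vzero.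
Proof.
  rewrite <- (v_scal0l X HXv vzero), HAscal. apply v_scal0l; auto.
Qed.

Lemma AN x : A (vopp x) = vopp (A x).
Proof.
  rewrite <- (v_scalN1 X HXv), HAscal. apply v_scalN1; auto.
Qed.

Definition psi (p : prodT X Y) : Y := vadd (snd p) (vopp (A (fst p))).

Lemma aff_transfer (S : prodT X Y -> Prop) (C : Y -> Prop)
  (H : forall p, S p <-> C (psi p)) : forall p, aff S p <-> aff C (psi p).
Proof.
  intros p; split.
  - intros Hp. apply (Hp (fun p => aff C (psi p))).
    + intros p1 p2 l H1 H2. unfold psi; simpl.
      rewrite HAadd, !HAscal, (v_sub_comb Y HYv).
      apply aff_affine; auto.
    + intros d Hd. apply aff_incl. apply H. exact Hd.
  - intros Hc.
    assert (HT : forall x : X, aff S (x, vadd (psi p) (A x))).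
    { apply (Hc (fun y => forall x : X, aff S (x, vadd y (A x)))).
      + intros y1 y2 l H1 H2 x.
        specialize (aff_affine S (x, vadd y1 (A x)) (x, vadd y2 (A x)) l (H1 x) (H2 x)).
        simpl. rewrite (v_comb_same X HXv), (v_comb_shift Y HYv). auto.
      + intros c Hc' x. apply aff_incl. apply H. unfold psi; simpl.
        rewrite (v_addK Y HYv). exact Hc'. }
    specialize (HT (fst p)). unfold psi in HT. rewrite (v_subK Y HYv) in HT.
    destruct p; exact HT.
Qed.

Lemma msub_transfer (S : prodT X Y -> Prop) (C : Y -> Prop)
  (H : forall p, S p <-> C (psi p)) : forall p, msub S S p <-> msub C C (psi p).
Proof.
  intros p; split.
  - intros (s & t & Hs & Ht & ->). exists (psi s), (psi t).
    split; [apply H; auto|]. split; [apply H; auto|].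
    unfold psi; simpl. rewrite HAadd, AN.
    rewrite (v_opp_add Y HYv), (v_swap Y HYv), (v_opp_add Y HYv). reflexivity.
  - intros (c1 & c2 & H1 & H2 & Hp).
    exists (fst p, vadd c1 (A (fst p))), (vzero, c2).
    split; [apply H; unfold psi; simpl; rewrite (v_addK Y HYv); auto|].
    split; [apply H; unfold psi; simpl; rewrite A0, (v_opp0 Y HYv), (v_add0 Y HYv); auto|].
    destruct p as [p1 p2]. simpl. rewrite (v_opp0 X HXv), (v_add0 X HXv).
    f_equal. unfold psi in Hp; simpl in Hp.
    rewrite <- (v_subK Y HYv p2 (A p1)), Hp.
    rewrite <- !(v_addA Y HYv). f_equal. apply v_addC; auto.
Qed.

End Main.

Theorem lemma1p1 (X Y : TVSdata) (HX : is_sep_lcs X) (HY : is_sep_lcs Y)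
  (U : X -> Prop) (V : Y -> Prop) (HU : convex U) (HV : convex V)
  (A : X -> Y) (HA : linear_continuous A) :
  ic (E := prodT X Y) (msub (setprod U V) (DeltaA A)) (vzero, vzero)
  <-> ic (msub V (image A U)) vzero.
Proof.
  destruct HX as (HXv & HXt & HXa & HXs & _).
  destruct HY as (HYv & HYt & HYa & HYs & _).
  destruct HA as (HAadd & HAscal & HAc).
  set (D := msub (setprod U V) (DeltaA A)).
  set (C := msub V (image A U)).
  assert (HD : forall p, D p <-> C (psi X Y A p)).
  { intros p; split.
    - intros ([u v] & [x ax] & [Hu Hv] & [x' Hx'] & ->). simpl in *.
      injection Hx' as <- ->.
      exists v, (A u). split; auto. split; [exists u; auto|].
      unfold psi; simpl. rewrite HAadd, (AN X Y HXv HYv A HAscal).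
      rewrite (v_opp_add Y HYv), (v_oppK Y HYv), (v_addA Y HYv).
      rewrite <- (v_addA Y HYv), (v_addC Y HYv (vopp (A u))), (v_addA Y HYv), (v_subK Y HYv). reflexivity.

    - intros (v & w & Hv & (u & Hu & ->) & Hp).
      destruct p as [p1 p2].
      exists (u, v), (vadd u (vopp p1), A (vadd u (vopp p1))).
      split; [split; auto|]. split; [eexists; reflexivity|].
      simpl. rewrite (v_sub_sub X HXv). f_equal.
      unfold psi in Hp; simpl in Hp.
      rewrite <- (v_subK Y HYv p2 (A p1)), Hp.
      rewrite HAadd, (AN X Y HXv HYv A HAscal), (v_opp_add Y HYv), (v_oppK Y HYv).
      symmetry; apply v_addA; auto. }
  assert (HaffD := aff_transfer X Y HXv HYv A HAadd HAscal D C HD).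
  assert (HDD := msub_transfer X Y HXv HYv A HAadd HAscal D C HD).
  assert (HaffDD := aff_transfer X Y HXv HYv A HAadd HAscal _ _ HDD).
  unfold ic. split.
  - intros [Hcl Hicr]. split.
    + unfold vclosed.
      apply (vopen_ext (fun y => exists W, (vopen W /\ forall z, W z -> ~ aff C z) /\ W y)).
      * intros y; split.
        -- intros (W & [_ HW] & Wy). auto.
        -- intros Hy. unfold vclosed in Hcl. simpl in Hcl.
           destruct (Hcl (vzero, y)) as (A1 & B1 & HA1 & HB1 & HAy & HBy & Hab).
           ++ rewrite HaffD. unfold psi; simpl.
              rewrite (A0 X Y HXv HYv A HAscal), (v_opp0 Y HYv), (v_add0 Y HYv). auto.
           ++ exists B1. split; auto. split; auto.
              intros z Hz Hcz. simpl in HBy.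
              refine (Hab vzero z _ Hz _).
              ** exact HAy.
              ** rewrite HaffD. unfold psi; simpl.
                 rewrite (A0 X Y HXv HYv A HAscal), (v_opp0 Y HYv), (v_add0 Y HYv). auto.
      * apply HYt. intros W [HW _]; auto.
    + intros y Hy.
      destruct (Hicr (vzero, y)) as (d & Hd & Hl).
      { apply HaffDD. unfold psi; simpl.
        rewrite (A0 X Y HXv HYv A HAscal), (v_opp0 Y HYv), (v_add0 Y HYv). auto. }
      exists d; split; auto. intros l Hl'. specialize (Hl l Hl').
      apply HD in Hl. unfold psi in Hl; simpl in Hl.
      rewrite (v_scal0r X HXv), (v_add0 X HXv), (A0 X Y HXv HYv A HAscal),
        (v_opp0 Y HYv), (v_add0 Y HYv) in Hl. exact Hl.
  - intros [Hcl Hicr]. split.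
    + unfold vclosed. simpl. intros [p1 p2] Hp. simpl.
      rewrite HaffD in Hp. unfold psi in Hp; simpl in Hp.
      destruct (HYa p2 (vopp (A p1)) _ Hcl Hp) as (W1 & W2 & HW1 & W1p & HW2 & W2p & HW).
      rewrite <- (v_scalN1 Y HYv) in W2p.
      destruct (HYs (-1) (A p1) W2 HW2 W2p) as (d & Hd & W3 & HW3 & W3p & HW3').
      exists (fun a => W3 (A a)), W1. split; [apply HAc; auto|]. split; auto.
      split; auto. split; auto.
      intros a b Ha Hb. rewrite HaffD. unfold psi; simpl.
      apply HW; auto. rewrite <- (v_scalN1 Y HYv). apply HW3'; auto.
      replace (-1 - -1) with 0 by ring. rewrite Rabs_R0. auto.
    + intros p Hp. apply (proj1 (HaffDD p)) in Hp.
      destruct (Hicr _ Hp) as (d & Hd & Hl).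
      exists d; split; auto. intros l Hl'. apply HD.
      specialize (Hl l Hl'). destruct p as [p1 p2]. unfold psi in *; simpl in *.
      rewrite !(v_add0l X HXv), !(v_add0l Y HYv) in *.
      rewrite HAscal, <- (v_scalN Y HYv l), <- (v_scalDr Y HYv); auto.
Qed.
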